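(* For all $n\geq 1$, \[2\bar{a}_2(n)=\bar{p}(2n,n).\]
   Context: An overpartition of $n$ is a partition of $n$ in which the first occurrence of each distinct part value may be overlined. $\bar{a}_2(n)$ is the number of overpartitions of $n$ in which the smallest part value occurs at least twice, where an overlined part and a non-overlined part of the same value count as equal. $\bar{p}(N,t)$ is the number of overpartitions of $N$ in which the largest part minus the smallest part equals $t$. *)

(* Defs.v *)
From mathcomp Require Import all_boot.
Set Implicit Arguments. Unset Strict Implicit. Unset Printing Implicit Defensive.

(* An overpartition of N is encoded by its multiplicity function
   m : value -> number of occurrences (values and multiplicities range over
   0..N), together with the set O of part values whose first occurrence is
   overlined. *)
Definition opart (N : nat) : finType :=
  ({ffun 'I_N.+1 -> 'I_N.+1} * {set 'I_N.+1})%type.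

Definition is_overpartition (N : nat) (x : opart N) : bool :=
  [&& x.1 ord0 == ord0 :> 'I_N.+1,
      \sum_(v : 'I_N.+1) (v : nat) * x.1 v == N
    & [forall v, (v \in x.2) ==> (0 < x.1 v)]].

(* v is the smallest (resp. largest) part value of x
   (multiplicity counts overlined and non-overlined copies together). *)
Definition is_smallest (N : nat) (x : opart N) (v : 'I_N.+1) : bool :=
  (0 < x.1 v) && [forall u, (0 < x.1 u) ==> (v <= u)].

Definition is_largest (N : nat) (x : opart N) (v : 'I_N.+1) : bool :=
  (0 < x.1 v) && [forall u, (0 < x.1 u) ==> (u <= v)].

Definition abar2 (n : nat) : nat :=
  #|[set x : opart n | is_overpartition x &&
      [exists v, is_smallest x v && (2 <= x.1 v)]]|.

Definition pbar (N t : nat) : nat :=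
  #|[set x : opart N | is_overpartition x &&
      [exists s, exists l, [&& is_smallest x s, is_largest x l & (l - s == t)]]]|.

(* Main.v *)
Require Import Defs.
From mathcomp Require Import all_boot zify.
Set Implicit Arguments. Unset Strict Implicit. Unset Printing Implicit Defensive.

Definition M N (x : opart N) (v : nat) : nat := if v < N.+1 then nat_of_ord (x.1 (inord v)) else 0.
Definition O N (x : opart N) (v : nat) : bool := (v < N.+1) && (inord v \in x.2).
Definition build N (m : nat -> nat) (o : nat -> bool) : opart N :=
  ([ffun v : 'I_N.+1 => inord (m v)], [set v : 'I_N.+1 | o v]).
Definition sm N (x : opart N) : nat := find (fun v => 0 < M x v) (iota 0 N.+1).

Lemma M_build N m o v : (forall v, v < N.+1 -> m v <= N) ->
  M (build N m o) v = if v < N.+1 then m v else 0.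
Proof.
move=> H; rewrite /M /build /=; case: ifP => // h.
by rewrite ffunE inordK // inordK // ltnS H.
Qed.

Lemma O_build N m o v : O (build N m o) v = (v < N.+1) && o v.
Proof. by rewrite /O /build /=; case h: (v < N.+1) => //=; rewrite inE inordK. Qed.

Lemma M_bound N (x : opart N) v : M x v <= N.
Proof. by rewrite /M; case: ifP => // _; rewrite -ltnS ltn_ord. Qed.

Lemma M_out N (x : opart N) v : N < v -> M x v = 0.
Proof. move=> h; rewrite /M; case: ifP => // h2; lia. Qed.

Lemma O_lt N (x : opart N) v : O x v -> v < N.+1.
Proof. by case/andP. Qed.

Lemma opart_eq N (x y : opart N) : (forall v, v < N.+1 -> M x v = M y v) ->
  (forall v, v < N.+1 -> O x v = O y v) -> x = y.
Proof.
case: x => f1 S1; case: y => f2 S2 /= H1 H2; congr pair.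
  apply/ffunP => v; apply: ord_inj; have := H1 v (ltn_ord v).
  by rewrite /M /= ltn_ord inord_val.
apply/setP => v; have := H2 v (ltn_ord v); by rewrite /O /= ltn_ord inord_val.
Qed.

Lemma sum_widen K1 K2 (F : nat -> nat) : K1 <= K2 ->
  (forall v, K1 <= v -> v < K2 -> F v = 0) ->
  \sum_(v < K2) F v = \sum_(v < K1) F v.
Proof.
move=> h H; rewrite (big_ord_widen K2 F h) [in RHS]big_mkcond; apply: eq_bigr => i _.
by case: ifP => // /negbT; rewrite -leqNgt => h1; rewrite H.
Qed.

Lemma sum_delta K a c : a < K -> \sum_(v < K) ((v : nat) == a) * c = c.
Proof.
move=> ha; rewrite (bigD1 (Ordinal ha)) //= eqxx mul1n big1 ?addn0 // => i hi.
by have -> : (i == a :> nat) = false by apply/negbTE; apply: contra hi => /eqP h; apply/eqP/ord_inj.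
Qed.

Lemma sum3 K (F : nat -> nat) a b c : a < K -> b < K -> c < K ->
  a != b -> a != c -> b != c -> F a + F b + F c <= \sum_(v < K) F v.
Proof.
move=> ha hb hc hab hac hbc.
rewrite -(sum_delta (F a) ha) -(sum_delta (F b) hb) -(sum_delta (F c) hc) -!big_split /=.
apply: leq_sum => v _.
case: (eqVneq (v:nat) a) => [->|h1]; first by rewrite (negbTE hab) (negbTE hac) /=; lia.
case: (eqVneq (v:nat) b) => [->|h2]; first by rewrite (negbTE hbc) /=; lia.
case: (eqVneq (v:nat) c) => [->|h3] /=; lia.
Qed.

Lemma sumM N (x : opart N) :
  \sum_(v : 'I_N.+1) (v:nat) * x.1 v = \sum_(v < N.+1) v * M x v.
Proof. by apply: eq_bigr => v _; rewrite /M ltn_ord inord_val. Qed.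

Lemma overP N (x : opart N) : is_overpartition x <->
  [/\ M x 0 = 0, \sum_(v < N.+1) v * M x v = N & forall v, O x v -> 0 < M x v].
Proof.
rewrite /is_overpartition sumM.
have E0 : M x 0 = x.1 ord0 by rewrite /M /=; congr (nat_of_ord (x.1 _)); apply: ord_inj; rewrite inordK.
split.
  case/and3P => /eqP h0 /eqP hs /forallP hf; split => //; first by rewrite E0 h0.
  move=> v /andP [hv hin]; have := hf (inord v); rewrite hin /= /M hv.
  by [].
case=> h0 hs hf; apply/and3P; split; [|by apply/eqP| ].
  by apply/eqP/ord_inj; rewrite -E0 h0.
apply/forallP => v; apply/implyP => hv.
have := hf v; rewrite /O /M ltn_ord inord_val; by apply.
Qed.

Lemma sm_spec N (x : opart N) : (exists v, 0 < M x v) ->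
  [/\ 0 < M x (sm x), forall u, 0 < M x u -> sm x <= u & sm x <= N].
Proof.
case=> v hv.
have vN : v < N.+1 by case: (ltnP v N.+1) => // h; rewrite M_out in hv.
have hh : has (fun v => 0 < M x v) (iota 0 N.+1).
  by apply/hasP; exists v => //; rewrite mem_iota.
have hs : sm x < N.+1 by rewrite -[N.+1](size_iota 0) -has_find.
split => //.
  by have := nth_find 0 hh; rewrite nth_iota.
move=> u hu; rewrite leqNgt; apply/negP => hlt.
have uN : u < N.+1 by apply: leq_trans hlt _; apply: ltnW.
by have := before_find 0 hlt; rewrite nth_iota // add0n hu.
Qed.

Lemma sm_eq N (x : opart N) s : 0 < M x s -> (forall u, 0 < M x u -> s <= u) -> sm x = s.
Proof.
move=> h1 h2; have [a b _] := sm_spec (ex_intro _ s h1).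
by apply/eqP; rewrite eqn_leq b // h2.
Qed.

Lemma smallestP N (x : opart N) (v : 'I_N.+1) : is_smallest x v <->
  (0 < M x v /\ forall u, 0 < M x u -> v <= u).
Proof.
rewrite /is_smallest; split.
  case/andP => h1 /forallP h2; split; first by rewrite /M ltn_ord inord_val.
  move=> u hu; have uN : u < N.+1 by case: (ltnP u N.+1) => // h; rewrite M_out in hu.
  by have := h2 (inord u); rewrite /M uN in hu; rewrite hu /= inordK.
case=> h1 h2; apply/andP; split; first by move: h1; rewrite /M ltn_ord inord_val.
apply/forallP => u; apply/implyP => hu; apply: h2.
by rewrite /M ltn_ord inord_val.
Qed.

Lemma largestP N (x : opart N) (v : 'I_N.+1) : is_largest x v <->
  (0 < M x v /\ forall u, 0 < M x u -> u <= v).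
Proof.
rewrite /is_largest; split.
  case/andP => h1 /forallP h2; split; first by rewrite /M ltn_ord inord_val.
  move=> u hu; have uN : u < N.+1 by case: (ltnP u N.+1) => // h; rewrite M_out in hu.
  by have := h2 (inord u); rewrite /M uN in hu; rewrite hu /= inordK.
case=> h1 h2; apply/andP; split; first by move: h1; rewrite /M ltn_ord inord_val.
apply/forallP => u; apply/implyP => hu; apply: h2.
by rewrite /M ltn_ord inord_val.
Qed.

Lemma exists_pos K (F : nat -> nat) : 0 < \sum_(v < K) v * F v -> exists v, 0 < F v.
Proof.
move=> h.
have [/existsP [v hv]|/existsPn hn] := boolP [exists v : 'I_K, 0 < F v]; first by exists v.
rewrite big1 in h => // v _; have := hn v; rewrite lt0n negbK => /eqP ->; by rewrite muln0.
Qed.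

Lemma over_pos N (x : opart N) : 0 < N -> is_overpartition x -> exists v, 0 < M x v.
Proof. by move=> hN /overP [_ hs _]; apply: (@exists_pos N.+1); rewrite hs. Qed.

Lemma abar_char n (x : opart n) : 0 < n -> is_overpartition x ->
  [exists v, is_smallest x v && (2 <= x.1 v)] = (2 <= M x (sm x)).
Proof.
move=> hn ho; have [a b c] := sm_spec (over_pos hn ho).
apply/existsP/idP.
  case=> v /andP [/smallestP [h1 h2] h3].
  by rewrite (sm_eq h1 h2) /M ltn_ord inord_val.
move=> h; exists (inord (sm x)); apply/andP; split.
  by apply/smallestP; rewrite inordK.
by move: h; rewrite /M ltnS c.
Qed.

Lemma pbar_char n (y : opart (2 * n)) : 0 < n -> is_overpartition y ->
  [exists s, exists l, [&& is_smallest y s, is_largest y l & (l - s == n)]] <->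
  (0 < M y (sm y + n) /\ forall u, 0 < M y u -> u <= sm y + n).
Proof.
move=> hn ho; have hn2 : 0 < 2 * n by lia.
have [a b c] := sm_spec (over_pos hn2 ho).
split.
  case/existsP => s /existsP [l /and3P [/smallestP [h1 h2] /largestP [h3 h4] /eqP h5]].
  rewrite (sm_eq h1 h2).
  have : s <= l by apply: h2.
  move=> hsl; have -> : (s + n = l) by lia.
  by split.
case=> h1 h2.
have hl : sm y + n < (2 * n).+1 by case: (ltnP (sm y + n) (2 * n).+1) => // h; rewrite M_out in h1.
apply/existsP; exists (inord (sm y)); apply/existsP; exists (inord (sm y + n)).
apply/and3P; split.
- by apply/smallestP; rewrite inordK.
- by apply/largestP; rewrite inordK.
- by rewrite !inordK //; lia.
Qed.

Definition Fm n (p : opart n * bool) : opart (2 * n) :=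
  build (2 * n) (fun v => M p.1 v + (v == sm p.1 + n) - (v == sm p.1))
     (fun v => O p.1 v || p.2 && (v == sm p.1 + n)).
Definition Gm n (y : opart (2 * n)) : opart n * bool :=
  (build n (fun v => M y v + (v == sm y)) (fun v => O y v), O y (sm y + n)).

Lemma sum_delta' K a c : a < K -> \sum_(v < K) c * ((v : nat) == a) = c.
Proof. by move=> h; rewrite -{2}(sum_delta c h); apply: eq_bigr => v _; rewrite mulnC. Qed.

Lemma F_prop n (x : opart n) b : 0 < n -> is_overpartition x -> 2 <= M x (sm x) ->
  [/\ is_overpartition (Fm (x, b)),
      0 < M (Fm (x, b)) (sm (Fm (x, b)) + n) /\
        (forall u, 0 < M (Fm (x, b)) u -> u <= sm (Fm (x, b)) + n)
    & Gm (Fm (x, b)) = (x, b)].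
Proof.
move=> hn ho h2.
have [hs1 hs2 hs3] := sm_spec (over_pos hn ho).
move: ho => /[dup] ho /overP [M0 hsum hO].
set s := sm x in h2 hs1 hs2 hs3 *.
have s1 : 0 < s by case: (posnP s) => // e; rewrite e M0 in hs1.
have HM : forall v, M (Fm (x, b)) v = M x v + (v == s + n) - (v == s).
  move=> v; rewrite /Fm /= M_build; last by move=> w _; have := M_bound x w; lia.
  case: ifP => // h; have := M_out x (_ : n < v); lia.
have HO : forall v, O (Fm (x, b)) v = O x v || b && (v == s + n).
  move=> v; rewrite /Fm /= O_build /=; case h: (v < (2 * n).+1) => //=.
  case: (boolP (O x v)) => [/O_lt|] /=; lia.
have Hsm : sm (Fm (x, b)) = s.
  apply: sm_eq; first by rewrite HM; lia.
  move=> u; rewrite HM; case: (eqVneq u (s + n)) => [->|hu]; first lia.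
  case: (eqVneq u s) => [->|hu2] //=; rewrite addn0 subn0; exact: hs2.
have Hmx : forall v, 0 < M x v -> v <= n.
  by move=> v hv; case: (leqP v n) => // h; rewrite M_out in hv.
split.
- apply/overP; split.
  + by rewrite HM M0; lia.
  + have E : forall v, v * M (Fm (x, b)) v + s * (v == s) =
                       v * M x v + (s + n) * (v == s + n).
      move=> v; rewrite HM; case: (eqVneq v s) => [->|hv].
        have -> : (s == s + n) = false by lia.
        nia.
      case: (eqVneq v (s + n)) => [->|hv2]; last by lia.
      by rewrite M_out; lia.
    have hs2n : s < (2 * n).+1 by lia.
    have hsn2n : s + n < (2 * n).+1 by lia.
    apply/eqP; rewrite -(eqn_add2r s) -{1}(sum_delta' s hs2n) -big_split /=.
    under eq_bigr => v _ do rewrite E.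
    rewrite big_split /= (sum_delta' _ hsn2n).
    rewrite (@sum_widen n.+1 _ (fun v => v * M x v)) ?hsum; first lia; first lia.
    by move=> v hv _; rewrite M_out ?muln0.
  + move=> v; rewrite HO HM; case/orP => [hv|/andP [_ /eqP ->]]; last lia.
    have := hO v hv; case: (eqVneq v s) => [->|hv2]; lia.
- rewrite Hsm HM eqxx; split; first lia.
  move=> u; rewrite HM; case: (eqVneq u (s + n)) => [->|hu] //.
  case: (eqVneq u s) => [->|hu2] /=; first lia.
  rewrite addn0 subn0 => /Hmx; lia.
- rewrite /Gm Hsm HO eqxx andbT.
  have -> : O x (s + n) = false by apply/negP => /O_lt; lia.
  congr pair; apply: opart_eq => v hv.
    rewrite M_build ?hv; last by move=> w hw; rewrite HM; have := M_bound x w; lia.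
    rewrite HM; case: (eqVneq v s) => [->|hv2]; lia.
  rewrite O_build hv HO /=.
  have -> : (v == s + n) = false by lia.
  by rewrite andbF orbF.
Qed.

Lemma G_prop n (y : opart (2 * n)) : 0 < n -> is_overpartition y ->
  0 < M y (sm y + n) -> (forall u, 0 < M y u -> u <= sm y + n) ->
  [/\ is_overpartition (Gm y).1, 2 <= M (Gm y).1 (sm (Gm y).1) & Fm (Gm y) = y].
Proof.
move=> hn ho hl hlu.
have hn2 : 0 < 2 * n by lia.
have [hs1 hs2 hs3] := sm_spec (over_pos hn2 ho).
move: ho => /[dup] ho /overP [M0 hsum hO].
set s := sm y in hl hlu hs1 hs2 hs3 *.
have s1 : 0 < s by case: (posnP s) => // e; rewrite e M0 in hs1.
set l := s + n in hl hlu *.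
have hl2n : l < (2 * n).+1 by case: (ltnP l (2 * n).+1) => // h; rewrite M_out in hl.
have S3 : forall v, v < (2 * n).+1 -> v != s -> v != l -> v != 0 ->
    v * M y v + s * M y s + l * M y l <= 2 * n.
  move=> v hv h1 h2 h3; rewrite -[X in _ <= X]hsum.
  apply: (sum3 (fun v => v * M y v)) => //; lia.
have S2 := S3 0; rewrite mul0n add0n in S2.
have hMl : M y l = 1.
  have : s * M y s + l * M y l <= 2 * n.
    have := sum3 (fun v => v * M y v) (ltn0Sn (2 * n)) (_ : s < (2 * n).+1) hl2n.
    rewrite mul0n add0n hsum; apply; lia.
  nia.
have hMs : s * M y s + l <= 2 * n.
  have := sum3 (fun v => v * M y v) (ltn0Sn (2 * n)) (_ : s < (2 * n).+1) hl2n.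
  rewrite mul0n add0n hsum hMl muln1; apply; lia.
have hMs2 : M y s + 1 <= n by nia.
have hv : forall v, v != s -> v != l -> 0 < M y v -> v <= n /\ M y v <= n.
  move=> v h1 h2 h3.
  have h0 : v != 0 by apply: contraTneq h3 => ->; rewrite M0.
  have h4 : v < (2 * n).+1 by case: (ltnP v (2 * n).+1) => // h; rewrite M_out in h3.
  have := S3 v h4 h1 h2 h0; rewrite hMl muln1 => h5.
  split; nia.
set x' := (Gm y).1.
have Hb : forall w, w < n.+1 -> M y w + (w == s) <= n.
  move=> w hw; case: (eqVneq w s) => [->|h1]; first lia.
  case: (posnP (M y w)) => [->|h3]; first lia.
  have := hv w h1 (_ : w != l) h3; lia.
have HM : forall v, M x' v = if v < n.+1 then M y v + (v == s) else 0.
  by move=> v; rewrite /x' /Gm /= M_build.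
have HO : forall v, O x' v = (v < n.+1) && O y v.
  by move=> v; rewrite /x' /Gm /= O_build.
have Hsm : sm x' = s.
  apply: sm_eq; first by rewrite HM (_ : s < n.+1); lia.
  move=> u; rewrite HM; case: ifP => // hu.
  case: (eqVneq u s) => [->|h1] //=; rewrite addn0; exact: hs2.
have hsn : s < n.+1 by lia.
split.
- apply/overP; split.
  + by rewrite HM /=; lia.
  + have E : forall v, v * M x' v + l * (v == l) = v * M y v + s * (v == s).
      move=> v; rewrite HM; case: (eqVneq v s) => [->|h1].
        rewrite hsn; have -> : (s == l) = false by lia.
        nia.
      case: (eqVneq v l) => [->|h2].
        by rewrite (_ : l < n.+1 = false) ?hMl; lia.
      case: ifP => h3; first lia.
      case: (posnP (M y v)) => [->|h4]; first lia.
      have := hv v h1 h2 h4; lia.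
    apply/eqP; rewrite -(eqn_add2r l).
    rewrite -(@sum_widen n.+1 (2 * n).+1 (fun v => v * M x' v)); first last.
    * by move=> v h1 h2; rewrite HM (_ : v < n.+1 = false) ?muln0 //; lia.
    * lia.
    rewrite -{1}(sum_delta' l hl2n) -big_split /=.
    under eq_bigr => v _ do rewrite E.
    rewrite big_split /= (sum_delta' _ (_ : s < (2 * n).+1)) ?hsum; lia.
  + move=> v; rewrite HO HM => /andP [h1 h2]; rewrite h1; have := hO v h2; lia.
- by rewrite Hsm HM hsn eqxx; have := hs1; lia.
- have -> : Gm y = (x', O y l) by [].
  apply: opart_eq => v hv2n.
    rewrite /Fm M_build; last first. move=> w _; rewrite /=. have := M_bound x' w. move: (M x' w) => k. lia.
    rewrite hv2n /= Hsm HM.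
    case: (eqVneq v s) => [->|h1].
      rewrite hsn; have -> : (s == l) = false by lia.
      lia.
    case: (eqVneq v l) => [->|h2].
      by rewrite (_ : l < n.+1 = false) ?hMl; lia.
    case: ifP => h3; first lia.
    case: (posnP (M y v)) => [->|h4]; first lia.
    have := hv v h1 h2 h4; lia.
  rewrite /Fm O_build hv2n /= Hsm HO.
  case: (eqVneq v l) => [->|h2]; first by rewrite andbT; case: (O y l); rewrite ?orbT ?orbF ?andbF.
  rewrite andbF orbF; case h3: (v < n.+1) => //=.
  apply/esym/negP => /hO h4.
  have hvs : v != s by apply: contraFneq h3 => ->.
  have := hv v hvs h2 h4; lia.
Qed.

Theorem theorem5p2 (n : nat) : 1 <= n -> 2 * abar2 n = pbar (2 * n) n.
Proof.
move=> hn; rewrite /abar2 /pbar.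
set A := [set x : opart n | _]; set B := [set x : opart (2 * n) | _].
have cardAB : #|setX A [set: bool]| = 2 * #|A| by rewrite cardsX cardsT card_bool mulnC.
rewrite -cardAB.
have HA : forall p, p \in setX A setT -> Fm p \in B /\ Gm (Fm p) = p.
  case=> x b; rewrite in_setX in_setT andbT inE => /andP [ho he].
  rewrite abar_char in he => //.
  have [h1 h2 h3] := F_prop b hn ho he; split => //.
  by rewrite inE h1 /=; apply/pbar_char.
have HB : forall y, y \in B -> Gm y \in setX A setT /\ Fm (Gm y) = y.
  move=> y; rewrite inE => /andP [ho /(pbar_char hn ho) [h1 h2]].
  have [g1 g2 g3] := G_prop hn ho h1 h2; split => //.
  by rewrite in_setX inE g1 /= abar_char // g2 in_setT.
have -> : B = (@Fm n) @: setX A setT.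
  apply/setP => y; apply/idP/imsetP.
    by move=> hy; exists (Gm y); [exact: (HB y hy).1 | rewrite (HB y hy).2].
  by case=> p hp ->; exact: (HA p hp).1.
rewrite card_in_imset // => p q hp hq e.
by rewrite -(HA p hp).2 -(HA q hq).2 e.
Qed.
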